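(* Let $0<\alpha<\beta<\tfrac12$ and $\rho=\frac{\log\beta}{\log\alpha}$. There exist constants $K_1,K_2>0$ such that for all $y,\tilde y\in A_\alpha$ with $|y-\tilde y|$ sufficiently small, $$K_1|y-\tilde y|^\rho\ \ge\ |I_p|\ \ge\ K_2|y-\tilde y|^\rho,\qquad I_p:=\sum_{i=0}^\infty\beta^i\big(y_{-i-1}-\tilde y_{-i-1}\big).$$
   Context: $A_\alpha\subset[0,1]$ is the Cantor set with $A_\alpha=\alpha A_\alpha\cup(\alpha A_\alpha+1-\alpha)$. The skinny baker's map $B_\alpha(x,y)=(2x,\alpha y)$ if $0\le x<\tfrac12$ and $(2x-1,\alpha y+1-\alpha)$ if $\tfrac12\le x<1$ is invertible on $[0,1)\times A_\alpha$ with inverse $B_\alpha^{-1}(x,y)=(x/2,y/\alpha)$ if $y\le\tfrac12$ and $((x+1)/2,(y-(1-\alpha))/\alpha)$ if $y>\tfrac12$. For $n\in\mathbb N$, $y_{-n}$ denotes the second coordinate of $B_\alpha^{-n}(x,y)$ (it depends only on $y$); similarly $\tilde y_{-n}$. *)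

(* Defs.v *)
From Stdlib Require Import Reals.
From Coquelicot Require Import Coquelicot.
Open Scope R_scope.

(* The middle-alpha Cantor set A_alpha = alpha A ∪ (alpha A + 1 - alpha),
   described as the attractor of the IFS {y -> alpha y, y -> alpha y + 1 - alpha}:
   points (1-alpha) * sum_k d_k alpha^k with digits d_k in {0,1}. *)
Definition A_alpha (alpha : R) (y : R) : Prop :=
  exists d : nat -> bool,
    is_series (fun k => (1 - alpha) * (if d k then 1 else 0) * alpha ^ k) y.

(* Second coordinate of B_alpha^{-1}(x,y) *)
Definition binv_y (alpha : R) (y : R) : R :=
  if Rle_dec y (1/2) then y / alpha else (y - (1 - alpha)) / alpha.

Fixpoint y_neg (alpha : R) (n : nat) (y : R) : R :=
  match n with
  | O => y
  | S m => binv_y alpha (y_neg alpha m y)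
  end.

Definition I_p (alpha beta y yt : R) : R :=
  Series (fun i => beta ^ i * (y_neg alpha (S i) y - y_neg alpha (S i) yt)).

(* Main.v *)
Require Import Defs.
From Stdlib Require Import Reals Lra Lia Psatz Classical FunctionalExtensionality.
From Coquelicot Require Import Coquelicot.
Open Scope R_scope.

Definition bt (b : bool) : R := if b then 1 else 0.
Definition term (a : R) (d : nat -> bool) (k : nat) : R := (1 - a) * bt (d k) * a ^ k.
Definition vv (a : R) (d : nat -> bool) : R := Series (term a d).

Lemma bt01 b : 0 <= bt b <= 1.
Proof. destruct b; simpl; lra. Qed.

Lemma term_bnd a d k : 0 < a < 1 -> 0 <= term a d k <= (1 - a) * a ^ k.
Proof.
  intros Ha. unfold term. pose proof (bt01 (d k)). pose proof (pow_lt a k ltac:(lra)).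
  split; [apply Rmult_le_pos; [apply Rmult_le_pos|]; lra|].
  apply Rmult_le_compat_r; [lra|]. nra.
Qed.

Lemma geom_ex a : 0 < a < 1 -> ex_series (fun k => (1 - a) * a ^ k).
Proof.
  intros Ha. apply (ex_series_scal_l (V:=R_NormedModule) (1 - a) (fun k => a ^ k)).
  apply ex_series_geom. rewrite Rabs_pos_eq; lra.
Qed.

Lemma geom_val a : 0 < a < 1 -> Series (fun k => (1 - a) * a ^ k) = 1.
Proof.
  intros Ha. rewrite Series_scal_l, Series_geom. field. lra. rewrite Rabs_pos_eq; lra.
Qed.


Lemma term_ex a d : 0 < a < 1 -> ex_series (term a d).
Proof.
  intros Ha. apply (ex_series_le (K:=R_AbsRing) (V:=R_CompleteNormedModule) (term a d) (fun k => (1 - a) * a ^ k)).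
  - intros n. change (norm (term a d n)) with (Rabs (term a d n)).
    pose proof (term_bnd a d n Ha). rewrite Rabs_pos_eq; lra.
  - apply geom_ex; auto.
Qed.

Lemma vv_bnd a d : 0 < a < 1 -> 0 <= vv a d <= 1.
Proof.
  intros Ha. split.
  - unfold vv. replace 0 with (Series (fun _ : nat => 0)).
    + apply Series_le; [intros n; pose proof (term_bnd a d n Ha); lra | apply term_ex; auto].
    + rewrite (Series_ext _ (fun n : nat => 0 * 1)) by (intros; ring). rewrite Series_scal_l. ring.
  - unfold vv. rewrite <- (geom_val a Ha). apply Series_le; [|apply geom_ex; auto].
    intros n; apply term_bnd; auto.
Qed.

Lemma vv_ext a d e : (forall k, d k = e k) -> vv a d = vv a e.
Proof. intros H. unfold vv. apply Series_ext. intros n. unfold term. rewrite H. auto. Qed.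

Lemma vv_rec a d : 0 < a < 1 -> vv a d = (1 - a) * bt (d 0%nat) + a * vv a (fun k => d (S k)).
Proof.
  intros Ha. unfold vv. rewrite Series_incr_1 by (apply term_ex; auto).
  rewrite <- Series_scal_l. unfold term at 1. simpl. f_equal; [ring|].
  apply Series_ext. intros n. unfold term. simpl. ring.
Qed.

Lemma binv_vv a d : 0 < a < 1/2 -> binv_y a (vv a d) = vv a (fun k => d (S k)).
Proof.
  intros Ha. assert (Ha1 : 0 < a < 1) by lra.
  pose proof (vv_rec a d Ha1) as R. pose proof (vv_bnd a (fun k => d (S k)) Ha1) as B.
  unfold binv_y. unfold bt in R. destruct (d 0%nat); destruct (Rle_dec (vv a d) (1/2)) as [h|h].
  - exfalso. nra.
  - rewrite R. field. lra.
  - rewrite R. field. lra.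
  - exfalso. nra.
Qed.

Lemma yneg_vv a d m : 0 < a < 1/2 -> y_neg a m (vv a d) = vv a (fun k => d (m + k)%nat).
Proof.
  intros Ha. induction m as [|m IH]; simpl.
  - apply vv_ext. auto.
  - rewrite IH, binv_vv by auto. apply vv_ext. intros k. f_equal. lia.
Qed.

Lemma A_vv a y : A_alpha a y -> exists d, y = vv a d.
Proof.
  intros [d H]. exists d. unfold vv. symmetry. apply is_series_unique. exact H.
Qed.
Definition TT (b : R) (D : nat -> R) (m : nat) : R := Series (fun i => b ^ i * D (S (m + i))).

Lemma TT_ex b D m : 0 < b < 1 -> (forall j, Rabs (D j) <= 1) ->
  ex_series (fun i => b ^ i * D (S (m + i))).
Proof.
  intros Hb HD. apply (ex_series_le (K:=R_AbsRing) (V:=R_CompleteNormedModule) _ (fun i => b ^ i)).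
  - intros n. change (norm (b ^ n * D (S (m + n)))) with (Rabs (b ^ n * D (S (m + n)))).
    rewrite Rabs_mult, Rabs_pos_eq by (apply pow_le; lra).
    pose proof (HD (S (m+n))). pose proof (pow_le b n ltac:(lra)). nra.
  - apply ex_series_geom. rewrite Rabs_pos_eq; lra.
Qed.

Lemma TT_bnd b D m : 0 < b < 1 -> (forall j, Rabs (D j) <= 1) -> Rabs (TT b D m) <= / (1 - b).
Proof.
  intros Hb HD. unfold TT. eapply Rle_trans; [apply Series_Rabs|].
  - apply (ex_series_le (K:=R_AbsRing) (V:=R_CompleteNormedModule) _ (fun i => b ^ i)).
    + intros n. change (norm (Rabs (b ^ n * D (S (m + n))))) with (Rabs (Rabs (b ^ n * D (S (m + n))))).
      rewrite Rabs_Rabsolu, Rabs_mult, Rabs_pos_eq by (apply pow_le; lra).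
      pose proof (HD (S (m+n))). pose proof (pow_le b n ltac:(lra)). nra.
    + apply ex_series_geom. rewrite Rabs_pos_eq; lra.
  - rewrite <- Series_geom by (rewrite Rabs_pos_eq; lra). apply Series_le.
    + intros n. split; [apply Rabs_pos|]. rewrite Rabs_mult, Rabs_pos_eq by (apply pow_le; lra).
      pose proof (HD (S (m+n))). pose proof (pow_le b n ltac:(lra)). nra.
    + apply ex_series_geom. rewrite Rabs_pos_eq; lra.
Qed.

Lemma TT_rec b D m : 0 < b < 1 -> (forall j, Rabs (D j) <= 1) -> TT b D m = D (S m) + b * TT b D (S m).
Proof.
  intros Hb HD. unfold TT. rewrite Series_incr_1 by (apply TT_ex; auto).
  rewrite <- Series_scal_l. simpl. rewrite Nat.add_0_r. f_equal; [ring|].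
  apply Series_ext. intros n. rewrite <- plus_n_Sm. simpl. ring.
Qed.

Lemma D_pow a D n : (forall j, (j < n)%nat -> D j = a * D (S j)) ->
  forall k j, (j + k = n)%nat -> D j = a ^ k * D n.
Proof.
  intros H k. induction k as [|k IH]; intros j Hj.
  - simpl. replace j with n by lia. ring.
  - rewrite H by lia. rewrite (IH (S j)) by lia. simpl. ring.
Qed.

Lemma TT_key a b D n : 0 < a -> a < b -> b < 1 -> (forall j, Rabs (D j) <= 1) ->
  (forall j, (j < n)%nat -> D j = a * D (S j)) ->
  forall k m, (m + k = n)%nat -> TT b D m = D n * (b ^ k - a ^ k) / (b - a) + b ^ k * TT b D n.
Proof.
  intros Ha Hab Hb HD H k. induction k as [|k IH]; intros m Hm.
  - replace m with n by lia. simpl. field. lra.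
  - rewrite TT_rec by (auto; lra). rewrite (IH (S m)) by lia.
    rewrite (D_pow a D n H k (S m)) by lia. simpl. field. lra.
Qed.
Lemma first_diff (d e : nat -> bool) k : d k <> e k ->
  exists n, (forall j, (j < n)%nat -> d j = e j) /\ d n <> e n.
Proof.
  induction k as [k IH] using (well_founded_induction Wf_nat.lt_wf). intros Hk.
  destruct (classic (forall j, (j < k)%nat -> d j = e j)) as [H|H].
  - exists k; auto.
  - apply not_all_ex_not in H. destruct H as [j Hj].
    apply imply_to_and in Hj. destruct Hj as [Hj1 Hj2]. apply (IH j); auto.
Qed.

Section Dig.
Variables (a : R) (d e : nat -> bool).
Hypothesis Ha : 0 < a < 1/2.
Let Dd (j : nat) := y_neg a j (vv a d) - y_neg a j (vv a e).

Lemma Dd_bnd j : Rabs (Dd j) <= 1.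
Proof.
  unfold Dd. rewrite !yneg_vv by auto.
  pose proof (vv_bnd a (fun k => d (j + k)%nat) ltac:(lra)).
  pose proof (vv_bnd a (fun k => e (j + k)%nat) ltac:(lra)).
  apply Rabs_le. lra.
Qed.

Lemma Dd_rec j : Dd j = (1 - a) * (bt (d j) - bt (e j)) + a * Dd (S j).
Proof.
  unfold Dd. rewrite !yneg_vv by auto.
  rewrite (vv_rec a (fun k => d (j + k)%nat)) by lra.
  rewrite (vv_rec a (fun k => e (j + k)%nat)) by lra.
  rewrite Nat.add_0_r.
  rewrite (vv_ext a (fun k => d (j + S k)%nat) (fun k => d (S j + k)%nat)) by (intros; f_equal; lia).
  rewrite (vv_ext a (fun k => e (j + S k)%nat) (fun k => e (S j + k)%nat)) by (intros; f_equal; lia).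
  ring.
Qed.

Lemma Dd_same j : d j = e j -> Dd j = a * Dd (S j).
Proof. intros H. rewrite Dd_rec, H. ring. Qed.

Lemma Dd_diff j : d j <> e j -> 1 - 2 * a <= Rabs (Dd j).
Proof.
  intros H. rewrite Dd_rec. pose proof (Dd_bnd (S j)) as B. apply Rabs_le_between in B.
  unfold bt. destruct (d j), (e j); try congruence.
  - rewrite Rabs_pos_eq; nra.
  - rewrite Rabs_left1; nra.
Qed.
End Dig.
Lemma pow_le1 x k : 0 <= x <= 1 -> x ^ k <= 1.
Proof. intros H. induction k; simpl; [lra|]. pose proof (pow_le x k ltac:(lra)). nra. Qed.

Lemma exp_le_mono x y : x <= y -> exp x <= exp y.
Proof. intros [H|H]; [left; apply exp_increasing; auto | subst; lra]. Qed.

Theorem lemma3p8 (alpha beta : R) :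
  0 < alpha -> alpha < beta -> beta < 1/2 ->
  let rho := ln beta / ln alpha in
  exists K1 K2 : R, 0 < K1 /\ 0 < K2 /\
    exists delta : R, 0 < delta /\
      forall y yt : R, A_alpha alpha y -> A_alpha alpha yt ->
        0 < Rabs (y - yt) < delta ->
        K1 * Rpower (Rabs (y - yt)) rho >= Rabs (I_p alpha beta y yt) /\
        Rabs (I_p alpha beta y yt) >= K2 * Rpower (Rabs (y - yt)) rho.
Proof.
  intros Ha Hab Hb rho.
  assert (Hla : ln alpha < 0) by (rewrite <- ln_1; apply ln_increasing; lra).
  assert (Hlb : ln beta < 0) by (rewrite <- ln_1; apply ln_increasing; lra).
  assert (Hrho : 0 < rho).
  { unfold rho, Rdiv. pose proof (Rinv_lt_0_compat _ Hla). nra. }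
  assert (Hrl : rho * ln alpha = ln beta) by (unfold rho; field; lra).
  set (eps := 2 - / (1 - beta)).
  assert (Heps : 0 < eps).
  { unfold eps. assert (/ (1 - beta) < 2); [|lra].
    apply (Rmult_lt_reg_r (1 - beta)); [lra|]. rewrite Rinv_l by lra. lra. }
  destruct (pow_lt_1_zero (alpha / beta)) with (y := eps / 4) as [N HN].
  { rewrite Rabs_pos_eq. apply (Rmult_lt_reg_r beta); [lra|]. unfold Rdiv.
    rewrite Rmult_assoc, Rinv_l by lra. lra. unfold Rdiv. apply Rmult_le_pos; [lra|].
    left; apply Rinv_0_lt_compat; lra. }
  { lra. }
  set (P := Rpower (1 - 2 * alpha) rho).
  assert (HP : 0 < P) by (unfold P, Rpower; apply exp_pos).
  set (Cu := / (beta - alpha) + / (1 - beta)).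
  assert (HCu : 0 < Cu).
  { unfold Cu. pose proof (Rinv_0_lt_compat (beta - alpha) ltac:(lra)).
    pose proof (Rinv_0_lt_compat (1 - beta) ltac:(lra)). lra. }
  exists (Cu / P), (eps / 2). split; [unfold Rdiv; apply Rmult_lt_0_compat; [lra|apply Rinv_0_lt_compat; lra]|].
  split; [lra|].
  exists ((1 - 2 * alpha) * alpha ^ N). split.
  { apply Rmult_lt_0_compat; [lra|apply pow_lt; lra]. }
  intros y yt Hy Hyt Hdist.
  destruct (A_vv _ _ Hy) as [d ->]. destruct (A_vv _ _ Hyt) as [e ->].
  assert (Hex : exists k, d k <> e k).
  { apply NNPP. intros Hn. assert (vv alpha d = vv alpha e).
    { apply vv_ext. intros k. apply NNPP. intros Hk. apply Hn. exists k; auto. }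
    rewrite H, Rminus_eq_0, Rabs_R0 in Hdist. lra. }
  destruct Hex as [k Hk]. destruct (first_diff d e k Hk) as [n [Hlt Hn]].
  assert (Ha2 : 0 < alpha < 1/2) by lra.
  set (D := fun j => y_neg alpha j (vv alpha d) - y_neg alpha j (vv alpha e)).
  assert (HD : forall j, Rabs (D j) <= 1) by (intros; apply Dd_bnd; auto).
  assert (HDs : forall j, (j < n)%nat -> D j = alpha * D (S j)).
  { intros j Hj. apply Dd_same; auto. }
  assert (HDn : 1 - 2 * alpha <= Rabs (D n)) by (apply Dd_diff; auto).
  assert (HD0 : vv alpha d - vv alpha e = alpha ^ n * D n).
  { apply (D_pow alpha D n HDs n 0%nat). lia. }
  assert (HI : I_p alpha beta (vv alpha d) (vv alpha e) = TT beta D 0) by reflexivity.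
  assert (Hkey : TT beta D 0 = D n * (beta ^ n - alpha ^ n) / (beta - alpha) + beta ^ n * TT beta D n).
  { apply (TT_key alpha beta D n); auto; lra. }
  assert (HTn : Rabs (TT beta D n) <= / (1 - beta)) by (apply TT_bnd; auto; lra).
  assert (Han : 0 < alpha ^ n) by (apply pow_lt; lra).
  assert (Hbn : 0 < beta ^ n) by (apply pow_lt; lra).
  assert (HnN : (N <= n)%nat).
  { destruct (Nat.le_gt_cases N n) as [h|h]; auto. exfalso.
    rewrite HD0, Rabs_mult, (Rabs_pos_eq (alpha ^ n)) in Hdist by lra.
    replace N with (n + (N - n))%nat in Hdist by lia. rewrite pow_add in Hdist.
    pose proof (pow_le1 alpha (N - n) ltac:(lra)). pose proof (pow_le alpha (N - n) ltac:(lra)).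
    assert (alpha ^ n * (1 - 2 * alpha) <= alpha ^ n * Rabs (D n)) by (apply Rmult_le_compat_l; lra).
    assert ((1 - 2 * alpha) * (alpha ^ n * alpha ^ (N - n)) <= (1 - 2 * alpha) * alpha ^ n).
    { apply Rmult_le_compat_l; [lra|]. rewrite <- (Rmult_1_r (alpha ^ n)) at 2. apply Rmult_le_compat_l; lra. }
    lra. }
  assert (Hab_n : alpha ^ n <= eps / 4 * beta ^ n).
  { specialize (HN n HnN). rewrite Rabs_pos_eq in HN.
    - unfold Rdiv in HN. rewrite Rpow_mult_distr, pow_inv in HN.
      apply Rlt_le. apply (Rmult_lt_reg_r (/ beta ^ n)); [apply Rinv_0_lt_compat; lra|].
      rewrite Rmult_assoc, Rinv_r by lra. lra.
    - apply pow_le. unfold Rdiv. apply Rmult_le_pos; [lra|]. left; apply Rinv_0_lt_compat; lra. }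
  assert (HDpos : 0 < Rabs (D n)) by lra.
  assert (HRp : Rpower (Rabs (vv alpha d - vv alpha e)) rho = beta ^ n * Rpower (Rabs (D n)) rho).
  { rewrite HD0, Rabs_mult, (Rabs_pos_eq (alpha ^ n)) by lra.
    rewrite <- Rpower_mult_distr by auto. f_equal.
    unfold Rpower. rewrite ln_pow by lra.
    replace (rho * (INR n * ln alpha)) with (INR n * ln beta) by (rewrite <- Hrl; ring).
    rewrite <- ln_pow by lra. apply exp_ln. auto. }
  assert (HRD : P <= Rpower (Rabs (D n)) rho <= 1).
  { pose proof (HD n). split.
    - unfold P. apply Rle_Rpower_l; [lra|split; lra].
    - replace 1 with (Rpower 1 rho) by (unfold Rpower; rewrite ln_1, Rmult_0_r; apply exp_0).
      apply Rle_Rpower_l; [lra|split; lra]. }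
  rewrite HRp, HI, Hkey.
  set (G := (beta ^ n - alpha ^ n) / (beta - alpha)).
  assert (HGe : D n * (beta ^ n - alpha ^ n) / (beta - alpha) = D n * G) by (unfold G, Rdiv; ring).
  rewrite HGe.
  assert (HG0 : 0 <= G).
  { unfold G, Rdiv. apply Rmult_le_pos; [|left; apply Rinv_0_lt_compat; lra].
    assert (alpha ^ n <= beta ^ n) by (apply pow_incr; lra). lra. }
  assert (HG1 : G <= beta ^ n * / (beta - alpha)).
  { unfold G, Rdiv. apply Rmult_le_compat_r; [left; apply Rinv_0_lt_compat; lra|]. lra. }
  assert (HG2 : 2 * (beta ^ n - alpha ^ n) <= (1 - 2 * alpha) * G).
  { unfold G. replace ((1 - 2 * alpha) * ((beta ^ n - alpha ^ n) / (beta - alpha)))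
      with (((1 - 2 * alpha) / (beta - alpha)) * (beta ^ n - alpha ^ n)) by (field; lra).
    assert (alpha ^ n <= beta ^ n) by (apply pow_incr; lra).
    apply Rmult_le_compat_r; [lra|].
    apply (Rmult_le_reg_r (beta - alpha)); [lra|]. unfold Rdiv.
    rewrite Rmult_assoc, Rinv_l by lra. lra. }
  assert (HDn1 : Rabs (D n) <= 1) by auto.
  assert (Hmul1 : Rabs (D n * G) = Rabs (D n) * G) by (rewrite Rabs_mult, (Rabs_pos_eq G); auto).
  assert (Hmul2 : Rabs (beta ^ n * TT beta D n) = beta ^ n * Rabs (TT beta D n))
    by (rewrite Rabs_mult, Rabs_pos_eq; lra).
  pose proof (Rabs_triang (D n * G) (beta ^ n * TT beta D n)) as Tr1.
  pose proof (Rabs_triang_inv (D n * G) (- (beta ^ n * TT beta D n))) as Tr2.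
  rewrite Rabs_Ropp in Tr2. unfold Rminus in Tr2. rewrite Ropp_involutive in Tr2.
  split.
  - apply Rle_ge.
    assert (Rabs (D n * G + beta ^ n * TT beta D n) <= Cu * beta ^ n).
    { unfold Cu. rewrite Hmul1, Hmul2 in Tr1.
      assert (Rabs (D n) * G <= G) by nra.
      assert (beta ^ n * Rabs (TT beta D n) <= beta ^ n * / (1 - beta)) by nra.
      nra. }
    eapply Rle_trans; [apply H|].
    replace (Cu * beta ^ n) with (Cu / P * (beta ^ n * P)) by (field; lra).
    apply Rmult_le_compat_l; [left; unfold Rdiv; apply Rmult_lt_0_compat; [lra|apply Rinv_0_lt_compat; lra]|].
    nra.
  - apply Rle_ge. rewrite Hmul1, Hmul2 in Tr2.
    assert ((1 - 2 * alpha) * G <= Rabs (D n) * G) by nra.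
    assert (beta ^ n * Rabs (TT beta D n) <= beta ^ n * / (1 - beta)) by nra.
    assert (eps / 2 * (beta ^ n * Rpower (Rabs (D n)) rho) <= eps / 2 * beta ^ n) by nra.
    unfold eps in *. nra.
Qed.
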